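(* Let $\mathcal{H}$ be a tree-to-tree Hennie machine (THM) with input ranked alphabet $\Sigma$ and output ranked alphabet $\Gamma$. Then $[\![\mathcal{H}]\!]$ has linear size-to-height increase: there exist constants $c,d$ such that for every $t\in T_\Sigma$ in the domain of $[\![\mathcal{H}]\!]$, $\mathrm{height}([\![\mathcal{H}]\!](t))\le c\,|t|+d$.
   Context: A ranked alphabet is a finite set $\Sigma$ with a map $\mathrm{rank}:\Sigma\to\mathbb{N}$; $\max\mathrm{rank}(\Sigma)$ is the maximal rank. A tree over $\Sigma$ is a finite ordered tree with nodes labeled in $\Sigma$ such that a node labeled $\sigma$ has exactly $\mathrm{rank}(\sigma)$ children; nodes are words over positive integers: the root is $\varepsilon$, the $i$-th child of $u$ is $ui$, and $u{\uparrow}$ denotes the parent of $u\neq\varepsilon$. $T_\Sigma$ is the set of trees over $\Sigma$; for a set $Y$ disjoint from $\Sigma$, $T_\Sigma[Y]$ is the set of trees over $\Sigma\cup Y$ where elements of $Y$ have rank $0$. $|t|$ is the number of nodes of $t$ and $\mathrm{height}(t)$ the maximal number of edges on a root-to-leaf path. An unrestricted tree-to-tree Hennie machine (uTHM) is a tuple $\mathcal{H}=(Q,M,\top,\Sigma,\Gamma,q_{init},\delta)$ where $Q$ is a finite set of states, $M$ a finite set of memory symbols, $\top\in M$, $\Sigma,\Gamma$ ranked alphabets (input/output), $q_{init}\in Q$, and $\delta:Q\times\Sigma\times M\rightharpoonup T_\Gamma[Q\times M\times D]$ is a partial function, $D=\{\uparrow\}\cup\{1,\dots,\max\mathrm{rank}(\Sigma)\}$,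 such that every leaf label $(q',m',d)$ of $\delta(q,\sigma,m)$ has $d\in\{\uparrow,1,\dots,\mathrm{rank}(\sigma)\}$. On an input $t\in T_\Sigma$, a configuration is a triple $(u,q,\mu)$ with $u$ a node of $t$, $q\in Q$, $\mu$ a map from nodes of $t$ to $M$; the initial configuration is $(\varepsilon,q_{init},\mu_\top)$ with $\mu_\top$ constantly $\top$. For a configuration $(u,q,\mu)$ and $(q',m',d)\in Q\times M\times D$, the successor is $(ud,q',\mu')$ where $\mu'(u)=m'$, $\mu'=\mu$ elsewhere, and $ud$ is the parent of $u$ if $d=\uparrow$ and the $d$-th child otherwise (undefined if that node does not exist). The step of a configuration $(u,q,\mu)$ is the tree obtained from $\delta(q,\mathrm{lab}_t(u),\mu(u))$ by replacing every leaf $(q',m',d)$ by the corresponding successor configuration (undefined if $\delta$ or a successor is undefined). Starting from the initial configuration and repeatedly replacing configuration-labeled leaves by their steps is a confluent rewriting; $[\![\mathcal{H}]\!](t)$ is the unique tree of $T_\Gamma$ so reached, if it exists, and is undefined otherwise. A branch-outputting run on $t$ is a sequence of configurations $C_0,\dots,C_n$ with $C_0$ initial and each $C_{i+1}$ a leaf label of the step of $C_i$. Its number of visits at a set $S$ of nodes is the number of $i$ such that the position of $C_i$ lies in $S$. $\mathcal{H}$ is a tree-to-tree Hennie machine (THM) if there is $N$ such that for every $t\in T_\Sigma$, every node $u$ of $t$ and every branch-outputting run on $t$, the number of visits at $\{u\}$ is at most $N$. *)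

(* Defs.v *)
From HB Require Import structures.
From mathcomp Require Import all_boot.
Set Implicit Arguments. Unset Strict Implicit. Unset Printing Implicit Defensive.

(* Finite ordered trees with labels in A (rank constraints are imposed by
   separate well-formedness predicates). *)
Inductive tree (A : Type) : Type := Node of A & seq (tree A).
Arguments Node {A} _ _.

Definition children {A} (t : tree A) : seq (tree A) := let: Node _ ts := t in ts.
Definition root_label {A} (t : tree A) : A := let: Node a _ := t in a.

Fixpoint tree_size {A} (t : tree A) : nat :=
  let: Node _ ts := t in (sumn (map tree_size ts)).+1.

Fixpoint height {A} (t : tree A) : nat :=
  let: Node _ ts := t in
  if ts is [::] then 0 else (foldr maxn 0 (map height ts)).+1.

Fixpoint wf {A} (rk : A -> nat) (t : tree A) : bool :=
  let: Node a ts := t in (size ts == rk a) && all (wf rk) ts.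

(* Nodes are words over positive integers; [::] is the root, rcons u i is
   the i-th child (1-based) of u. subtree t u = Some (subtree at u) if u is
   a node of t, None otherwise. *)
Fixpoint subtree {A} (t : tree A) (u : seq nat) {struct u} : option (tree A) :=
  match u with
  | [::] => Some t
  | i :: u' =>
      if 0 < i then
        match onth (children t) i.-1 with
        | Some t' => subtree t' u'
        | None => None
        end
      else None
  end.

Definition is_node {A} (t : tree A) (u : seq nat) : Prop := subtree t u <> None.

Definition lab {A} (t : tree A) (u : seq nat) : option A :=
  omap root_label (subtree t u).

(* Directions D = {up} u {1,...,maxrank}: None = up, Some i = i-th child. *)
Definition dir := option nat.

(* Well-formedness of an element of T_Gamma[Q x M x D] appearing as
   delta(q, sigma, m) with rank sigma = r: Gamma-symbols respect their rank,
   (q',m',d) symbols are leaves, and d is up or in {1,...,r}. *)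
Fixpoint out_wf {G X : Type} (rkG : G -> nat) (r : nat) (s : tree (G + (X * dir)))
  : bool :=
  let: Node a ts := s in
  match a with
  | inl g => (size ts == rkG g) && all (out_wf rkG r) ts
  | inr (_, d) =>
      nilp ts && (if d is Some i then (0 < i) && (i <= r) else true)
  end.

Fixpoint cleaves {G X : Type} (s : tree (G + X)) : seq X :=
  let: Node a ts := s in
  match a with
  | inr x => [:: x]
  | inl _ => flatten (map cleaves ts)
  end.

Record uTHM (Sigma Gamma : finType) (rkS : Sigma -> nat) (rkG : Gamma -> nat) := {
  hQ : finType;
  hM : finType;
  htop : hM;
  hqinit : hQ;
  hdelta : hQ -> Sigma -> hM -> option (tree (Gamma + (hQ * hM * dir)));
  hdelta_wf : forall q s m o, hdelta q s m = Some o -> out_wf rkG (rkS s) o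
}.

Arguments hQ {Sigma Gamma rkS rkG} _.
Arguments hM {Sigma Gamma rkS rkG} _.
Arguments htop {Sigma Gamma rkS rkG} _.
Arguments hqinit {Sigma Gamma rkS rkG} _.
Arguments hdelta {Sigma Gamma rkS rkG} _ _ _ _.

Section Semantics.
Variables (Sigma Gamma : finType) (rkS : Sigma -> nat) (rkG : Gamma -> nat).
Variable H : uTHM rkS rkG.

Record config := Config {
  cpos : seq nat;
  cstate : hQ H;
  cmem : seq nat -> hM H
}.

Definition init_config : config := Config [::] (hqinit H) (fun _ => htop H).

Variable t : tree Sigma.

Definition succ (C : config) (x : hQ H * hM H * dir) : option config :=
  let: (q', m', d) := x in
  let u := cpos C in
  let mu' := fun w => if w == u then m' else cmem C w in
  match d with
  | None => if u is [::] then None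
            else Some (Config (take (size u).-1 u) q' mu')
  | Some i => if subtree t (rcons u i) is Some _
              then Some (Config (rcons u i) q' mu') else None
  end.

Definition delta_at (C : config) : option (tree (Gamma + (hQ H * hM H * dir))) :=
  match lab t (cpos C) with
  | Some sg => hdelta H (cstate C) sg (cmem C (cpos C))
  | None => None
  end.

(* evalC C o : rewriting starting from configuration C terminates in the
   output tree o in T_Gamma (least fixed point = finite rewriting). *)
Inductive evalC : config -> tree Gamma -> Prop :=
| EvC C s o : delta_at C = Some s -> evalT C s o -> evalC C o
with evalT : config -> tree (Gamma + (hQ H * hM H * dir)) -> tree Gamma -> Prop :=
| EvNode C g ts os : evalL C ts os -> evalT C (Node (inl g) ts) (Node g os)
| EvLeaf C x C' o : succ C x = Some C' -> evalC C' o ->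
    evalT C (Node (inr x) [::]) o
with evalL : config -> seq (tree (Gamma + (hQ H * hM H * dir))) -> seq (tree Gamma) -> Prop :=
| EvNil C : evalL C [::] [::]
| EvCons C s ss o os : evalT C s o -> evalL C ss os -> evalL C (s :: ss) (o :: os).

Definition sem (o : tree Gamma) : Prop := evalC init_config o.

Definition step_leaf (C C' : config) : Prop :=
  exists s, delta_at C = Some s /\
    (forall x, x \in cleaves s -> succ C x <> None) /\
    exists2 x, x \in cleaves s & succ C x = Some C'.

Definition branch_run (n : nat) (run : nat -> config) : Prop :=
  run 0 = init_config /\ forall i, i < n -> step_leaf (run i) (run i.+1).

Definition visits (n : nat) (run : nat -> config) (u : seq nat) : nat :=
  count (fun i => cpos (run i) == u) (iota 0 n.+1).

End Semantics.

Definition isTHM (Sigma Gamma : finType) (rkS : Sigma -> nat) (rkG : Gamma -> nat)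
  (H : uTHM rkS rkG) : Prop :=
  exists N : nat, forall t : tree Sigma, wf rkS t ->
    forall u, is_node t u ->
    forall (n : nat) (run : nat -> config H),
      branch_run t n run -> visits n run u <= N.

(* Main.v *)
Require Import Defs.
From mathcomp Require Import all_boot.
Set Implicit Arguments. Unset Strict Implicit. Unset Printing Implicit Defensive.

Fixpoint naux {A} (f : tree A -> seq (seq nat)) (k : nat) (ts : seq (tree A)) : seq (seq nat) :=
  match ts with [::] => [::] | t :: ts' => map (cons k) (f t) ++ naux f k.+1 ts' end.

Fixpoint nodes {A} (t : tree A) : seq (seq nat) :=
  let: Node _ ts := t in [::] :: naux nodes 1 ts.

Lemma size_nodes A (t : tree A) : size (nodes t) = tree_size t.
Proof.
move: t; fix IH 1 => -[a ts] /=; congr S.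
move: 1; move: ts; fix IH2 1 => -[|t' ts] k //=.
by rewrite size_cat size_map IH IH2.
Qed.

Lemma naux_mem A (f : tree A -> seq (seq nat)) ts k j t' v :
  onth ts j = Some t' -> v \in f t' -> (k + j) :: v \in naux f k ts.
Proof.
elim: ts k j => [|s ts IH] k [|j] //=.
- by case=> -> hv; rewrite addn0 mem_cat (map_f (cons k) hv).
- by move=> h hv; rewrite mem_cat -addSnnS (IH _ _ h hv) orbT.
Qed.

Lemma node_mem A (t : tree A) u : is_node t u -> u \in nodes t.
Proof.
elim: u t => [|i u IH] [a ts]; rewrite /is_node /=.
- by move=> _; exact: mem_head.
- case: i => [|i] //=. case E: (onth ts i) => [t'|] // h.
  rewrite in_cons; apply/orP; right.
  by have := naux_mem (f:=nodes) 1 E (IH t' h); rewrite add1n.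
Qed.

Lemma subtree_cat A (t : tree A) u v :
  subtree t (u ++ v) = obind (subtree^~ v) (subtree t u).
Proof.
elim: u t => [|i u IH] t //=.
case: (0 < i) => //; case: onth => [t'|] //=.
Qed.

Lemma count_cover (f : nat -> seq nat) L s :
  all (fun i => f i \in L) s -> size s <= sumn [seq count (fun i => f i == u) s | u <- L].
Proof.
rewrite all_count => /eqP <-.
elim: L => [|u L IH] /=.
  by rewrite (@eq_count _ _ pred0) ?count_pred0.
apply: leq_trans (leq_add (leqnn _) IH).
rewrite -(count_predUI (fun i => f i == u) (fun i => f i \in L)).
apply: leq_trans (leq_addr _ _).
by apply: eq_leq; apply: eq_count => i /=; rewrite in_cons.
Qed.

Lemma sumn_bound (T : eqType) (g : T -> nat) N (L : seq T) :
  (forall u, u \in L -> g u <= N) -> sumn [seq g u | u <- L] <= N * size L.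
Proof.
elim: L => [|u L IH] h //=.
rewrite mulnS leq_add ?h ?mem_head // IH // => v hv.
by apply: h; rewrite in_cons hv orbT.
Qed.

Scheme evalC_mind := Induction for evalC Sort Prop
with evalT_mind := Induction for evalT Sort Prop
with evalL_mind := Induction for evalL Sort Prop.

Definition Kof (Sigma Gamma : finType) (rkS : Sigma -> nat) (rkG : Gamma -> nat)
  (H : uTHM rkS rkG) : nat :=
  \max_(x : hQ H * Sigma * hM H)
     (if hdelta H x.1.1 x.1.2 x.2 is Some s then height s else 0).

Lemma delta_height (Sigma Gamma : finType) (rkS : Sigma -> nat) (rkG : Gamma -> nat)
  (H : uTHM rkS rkG) t (C : config H) s :
  delta_at t C = Some s -> height s <= Kof H.
Proof.
rewrite /delta_at; case: lab => // sg E.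
have := leq_bigmax (F := fun x : hQ H * Sigma * hM H =>
   (if hdelta H x.1.1 x.1.2 x.2 is Some s then height s else 0))
   (cstate C, sg, cmem C (cpos C)).
by rewrite /= E.
Qed.

Definition chain (Sigma Gamma : finType) (rkS : Sigma -> nat) (rkG : Gamma -> nat)
  (H : uTHM rkS rkG) t L (r : nat -> config H) :=
  forall i, i < L -> step_leaf t (r i) (r i.+1).

Definition G (Sigma Gamma : finType) (rkS : Sigma -> nat) (rkG : Gamma -> nat)
  (H : uTHM rkS rkG) t K (C : config H) (X : seq (hQ H * hM H * dir)) h v :=
  v <= h \/ exists x C' L r,
    [/\ x \in X, succ t C x = Some C', r 0 = C', chain t L r & v <= h + K.+1 * L.+1].

Lemma G_mono (Sigma Gamma : finType) (rkS : Sigma -> nat) (rkG : Gamma -> nat)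
  (H : uTHM rkS rkG) t K (C : config H) X X' h h' v v' :
  {subset X <= X'} -> h <= h' -> v' <= v -> G t K C X h v -> G t K C X' h' v'.
Proof.
move=> hX hh hv [le|[x [C' [L [r [hx hs hr hc hle]]]]]].
  by left; apply: leq_trans hv (leq_trans le hh).
right; exists x, C', L, r; split => //; first exact: hX.
by apply: leq_trans hv (leq_trans hle _); rewrite leq_add2r.
Qed.

Lemma G_shift (Sigma Gamma : finType) (rkS : Sigma -> nat) (rkG : Gamma -> nat)
  (H : uTHM rkS rkG) t K (C : config H) X h v :
  G t K C X h v -> G t K C X h.+1 v.+1.
Proof.
move=> [le|[x [C' [L [r [hx hs hr hc hle]]]]]]; first by left.
by right; exists x, C', L, r; split.
Qed.

Lemma evalL_size (Sigma Gamma : finType) (rkS : Sigma -> nat) (rkG : Gamma -> nat)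
  (H : uTHM rkS rkG) t (C : config H) ts os : evalL t C ts os -> size ts = size os.
Proof. by elim => //= ? ? ? ? ? ? ? ->. Qed.

Definition hs (A : Type) (l : seq (tree A)) := foldr maxn 0 (map height l).

Lemma height_le (A : Type) (a : A) os : height (Node a os) <= (hs os).+1.
Proof. by case: os. Qed.

Lemma eval_chain (Sigma Gamma : finType) (rkS : Sigma -> nat) (rkG : Gamma -> nat)
  (H : uTHM rkS rkG) t (C : config H) o :
  evalC t C o -> exists L r, [/\ r 0 = C, chain t L r & height o <= (Kof H).+1 * L.+1].
Proof.
set K := Kof H.
apply: (evalC_mind
  (P := fun C o _ => exists L r, [/\ r 0 = C, chain t L r & height o <= K.+1 * L.+1])
  (P0 := fun C s o _ => (forall x, x \in cleaves s -> succ t C x <> None) /\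
                        G t K C (cleaves s) (height s) (height o))
  (P1 := fun C ss os _ => (forall x, x \in flatten (map cleaves ss) -> succ t C x <> None) /\
                        G t K C (flatten (map cleaves ss)) (hs ss) (hs os))).
- move=> {}C s {}o e e0 [hl hg].
  have hsK := delta_height e.
  case: hg => [le|[x [C' [L [r [hx hsx hr hc hle]]]]]].
    exists 0, (fun _ => C); split => //; rewrite muln1.
    exact: leq_trans le (leqW hsK).
  exists L.+1, (fun i => if i is j.+1 then r j else C); split => //.
    move=> [|i] /= hi; last exact: hc.
    by rewrite hr; exists s; split => //; split => //; exists x.
  rewrite mulnS; apply: leq_trans hle _; rewrite leq_add2r; exact: leqW.
- move=> {}C g ts os e [hl hg]; split; first exact: hl.
  case: ts e hl hg => [|s ss] e hl hg.
    by move: (evalL_size e) => /esym /size0nil ->; left.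
  apply: (G_mono (X := cleaves (Node (inl g) (s :: ss))) (h := (hs (s :: ss)).+1) (v := (hs os).+1)) => //.
    exact: height_le.
- move=> {}C x C' {}o e e0 [L [r [hr hc hh]]]; split.
    by move=> y; rewrite inE => /eqP ->; rewrite e.
  right; exists x, C', L, r; split => //; first exact: mem_head.
- by move=> {}C; split => //; left.
- move=> {}C s ss {}o os e [hl1 hg1] e0 [hl2 hg2]; split.
    by move=> x /=; rewrite mem_cat => /orP[]; [apply: hl1 | apply: hl2].
  rewrite /hs /=; case: (leqP (height o) (foldr maxn 0 (map height os))) => h.
        apply: (G_mono _ _ (leqnn _) hg2).
      by move=> y hy /=; rewrite mem_cat hy orbT.
    exact: leq_maxr.
  apply: (G_mono _ _ (leqnn _) hg1).
    by move=> y hy /=; rewrite mem_cat hy.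
  by case: (s) => a l; rewrite leq_maxl.
Qed.

Lemma succ_node (Sigma Gamma : finType) (rkS : Sigma -> nat) (rkG : Gamma -> nat)
  (H : uTHM rkS rkG) t (C C' : config H) x :
  is_node t (cpos C) -> succ t C x = Some C' -> is_node t (cpos C').
Proof.
case: x => [[q m] d]; rewrite /succ; case: d => [i|].
  by case E: subtree => [s|] // _ [<-] /=; rewrite /is_node E.
case: C => pos q0 mem /=; case: pos => [|b l] // hn [<-] /=.
have -> : take (size l) (b :: l) = belast b l by rewrite lastI -cats1 take_size_cat // size_belast.
move: hn; rewrite (lastI b l) -cats1.
by rewrite /is_node subtree_cat; case: subtree.
Qed.

Theorem mainTheorem1 (Sigma Gamma : finType) (rkS : Sigma -> nat) (rkG : Gamma -> nat)
  (H : uTHM rkS rkG) :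
  isTHM H ->
  exists c d : nat, forall t : tree Sigma, wf rkS t ->
    forall o : tree Gamma, sem H t o -> height o <= c * tree_size t + d.
Proof.
move=> [N HN]; set K := Kof H.
exists (K.+1 * N), 0 => t wt o ho.
have [L [r [r0 hc hh]]] := eval_chain ho.
have hbr : branch_run t L r by split.
have hnodes : forall i, i <= L -> is_node t (cpos (r i)).
  elim => [|i IH] hi; first by rewrite r0.
  have [s [_ [_ [x _ hx]]]] := hc i hi.
  exact: succ_node (IH (ltnW hi)) hx.
have hcount : L.+1 <= sumn [seq visits L r u | u <- nodes t].
  have := @count_cover (fun i => cpos (r i)) (nodes t) (iota 0 L.+1).
  rewrite size_iota; apply.
  apply/allP => i; rewrite mem_iota add0n => /andP[_ hi].
  exact/node_mem/hnodes.
have hsum : sumn [seq visits L r u | u <- nodes t] <= N * tree_size t.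
  rewrite -size_nodes; apply: sumn_bound => u _.
  case E: (subtree t u) => [s|].
    by apply: (HN t wt u _ L r hbr); rewrite /is_node E.
  rewrite /visits (@eq_in_count _ _ pred0) ?count_pred0 // => i.
  rewrite mem_iota add0n => /andP[_ hi] /=; apply/negbTE/eqP => heq.
  by have := hnodes i hi; rewrite heq /is_node E.
rewrite addn0 -mulnA; apply: leq_trans hh _; rewrite leq_mul2l.
by apply/orP; right; exact: leq_trans hcount hsum.
Qed.
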